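(* Let $a>b>0$ and $\lambda\ge 0$, and let $D_T$, $D_C$ be the subsets of the plane $\mathbb{R}^2(s,h)$ defined in the context. Put $$\Lambda(a,b)=\frac{a^6-33a^4b^2-33a^2b^4+b^6+(a^4+14a^2b^2+b^4)^{3/2}}{54a^2b^2}.$$ If $\lambda^4<\Lambda(a,b)$, then $D_T$ and $D_C$ have exactly two common points, and these are the points $(s,h)$ determined by $$(a^2-s^2)(s^2-b^2)-2\lambda^2s^3=0,\qquad s>0,\qquad h=\frac{2s^2-s\lambda^2+a^2+b^2}{2s}.$$ If $\lambda^4=\Lambda(a,b)$, these two points merge into a single point at which the curves $D_T$ and $D_C$ are tangent. If $\lambda^4>\Lambda(a,b)$, then $D_T$ and $D_C$ have no common points.
   Context: Parameters: $a>b>0$, $\lambda\ge 0$. Define $$F_C(s,h)=3s^4-2\Big(h-\frac{\lambda^2}{2}\Big)s^3+a^2b^2,\qquad F_T(s,h)=2s^2-2\Big(h+\frac{\lambda^2}{2}\Big)s+a^2+b^2.$$ Sets in the $(s,h)$-plane: $D_T=\{(s,h): F_T(s,h)=0,\ s>0,\ 2\lambda^2 s\le (a+b)^2\}$; $D_C=\{(s,h): F_C(s,h)=0,\ s\in\{-\sqrt{ab}\}\cup(0,s_*]\}$, where $s_*$ is the largest real root of the polynomial $$ \begin{aligned} \Phi_C(s)={}&[a^4b^4-6a^2b^2s^4+4(a^2+b^2)s^6-3s^8]^2\\ &+2[3a^6b^6+3a^4b^4s^4-20a^2b^2(a^2+b^2)s^6+57a^2b^2s^8-12(a^2+b^2)s^{10}+s^{12}]s^3\lambda^2\\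 &+4[3a^4b^4+15a^2b^2s^4-(a^2+b^2)s^6]s^6\lambda^4+8a^2b^2s^9\lambda^6 \end{aligned} $$ (such a root exists and is positive). *)

(* Defs.v *)
From Stdlib Require Import Reals.
From Coquelicot Require Import Coquelicot.
Open Scope R_scope.

Definition F_C (a b lam s h : R) : R :=
  3 * s ^ 4 - 2 * (h - lam ^ 2 / 2) * s ^ 3 + a ^ 2 * b ^ 2.

Definition F_T (a b lam s h : R) : R :=
  2 * s ^ 2 - 2 * (h + lam ^ 2 / 2) * s + a ^ 2 + b ^ 2.

Definition Phi_C (a b lam s : R) : R :=
  (a ^ 4 * b ^ 4 - 6 * a ^ 2 * b ^ 2 * s ^ 4 + 4 * (a ^ 2 + b ^ 2) * s ^ 6
     - 3 * s ^ 8) ^ 2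
  + 2 * (3 * a ^ 6 * b ^ 6 + 3 * a ^ 4 * b ^ 4 * s ^ 4
         - 20 * a ^ 2 * b ^ 2 * (a ^ 2 + b ^ 2) * s ^ 6
         + 57 * a ^ 2 * b ^ 2 * s ^ 8 - 12 * (a ^ 2 + b ^ 2) * s ^ 10
         + s ^ 12) * s ^ 3 * lam ^ 2
  + 4 * (3 * a ^ 4 * b ^ 4 + 15 * a ^ 2 * b ^ 2 * s ^ 4
         - (a ^ 2 + b ^ 2) * s ^ 6) * s ^ 6 * lam ^ 4
  + 8 * a ^ 2 * b ^ 2 * s ^ 9 * lam ^ 6.

Definition is_largest_root_PhiC (a b lam r : R) : Prop :=
  Phi_C a b lam r = 0 /\ (forall x, Phi_C a b lam x = 0 -> x <= r).

Definition in_D_T (a b lam s h : R) : Prop :=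
  F_T a b lam s h = 0 /\ 0 < s /\ 2 * lam ^ 2 * s <= (a + b) ^ 2.

Definition in_D_C (a b lam s h : R) : Prop :=
  F_C a b lam s h = 0 /\
  (s = - sqrt (a * b) \/
   (0 < s /\ exists sstar, is_largest_root_PhiC a b lam sstar /\ s <= sstar)).

Definition Lambda (a b : R) : R :=
  let q := a ^ 4 + 14 * a ^ 2 * b ^ 2 + b ^ 4 in
  (a ^ 6 - 33 * a ^ 4 * b ^ 2 - 33 * a ^ 2 * b ^ 4 + b ^ 6 + q * sqrt q)
  / (54 * a ^ 2 * b ^ 2).

Definition common_sys (a b lam s h : R) : Prop :=
  (a ^ 2 - s ^ 2) * (s ^ 2 - b ^ 2) - 2 * lam ^ 2 * s ^ 3 = 0 /\ 0 < s /\
  h = (2 * s ^ 2 - s * lam ^ 2 + a ^ 2 + b ^ 2) / (2 * s).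

Definition tangent_at (F G : R -> R -> R) (s h : R) : Prop :=
  let Fs := Derive (fun x => F x h) s in
  let Fh := Derive (fun y => F s y) h in
  let Gs := Derive (fun x => G x h) s in
  let Gh := Derive (fun y => G s y) h in
  F s h = 0 /\ G s h = 0 /\
  (Fs <> 0 \/ Fh <> 0) /\ (Gs <> 0 \/ Gh <> 0) /\
  Fs * Gh - Fh * Gs = 0.

(* Main.v *)
Require Import Defs.
From Stdlib Require Import Reals Lra Lia Psatz List Classical.
From Coquelicot Require Import Coquelicot.
Import ListNotations.
Open Scope R_scope.
Definition ma (p:R) : R := (15552)*p^0 + (-221184)*p^1 + (-77760)*p^2 + (11354112)*p^3 + (-134074304)*p^4 + (24010752)*p^5 + (-99648)*p^6 + (2457600)*p^7 + (-19584)*p^8 + (-3710976)*p^9 + (56960)*p^10 + (-442368)*p^11 + (-11136)*p^12 + (106496)*p^13 + (-11904)*p^14 + (3008)*p^16 + (1344)*p^18 + (-192)*p^20 + (-64)*p^22.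
Definition mb (p:R) : R := (-576)*p^0 + (-32336)*p^1 + (28416)*p^2 + (198768)*p^3 + (121344)*p^4 + (-487488)*p^5 + (148224)*p^6 + (658368)*p^7 + (20352)*p^8 + (-491616)*p^9 + (-54016)*p^10 + (195360)*p^11 + (-9216)*p^12 + (-33088)*p^13 + (8448)*p^14 + (192)*p^15 + (-832)*p^16 + (48)*p^17 + (-16)*p^19.
Definition Bf1 A s := A^2 - 6*A*s^4 + 4*(A+1)*s^6 - 3*s^8.
Definition P1f A s := 3*A^3 + 3*A^2*s^4 - 20*A*(A+1)*s^6 + 57*A*s^8 - 12*(A+1)*s^10 + s^12.
Definition P2f A s := 3*A^2 + 15*A*s^4 - (A+1)*s^6.
Definition Qf A s M := P1f A s + 2*M*P2f A s + 4*A*M^2.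
Definition Ap p := (3+8*p^2+6*p^4-p^8)/(16*p^2).
Definition tp p := (1+p^2)/(2*p).
Lemma Bf1_tp p : p <> 0 -> Bf1 (Ap p) (tp p) = 0.
Proof. intros; unfold Bf1, Ap, tp; field; auto. Qed.
Lemma P1_tp p : p <> 0 -> P1f (Ap p) (tp p) = - (1-p^2)^6*(1+p^2)^9/(512*p^12).
Proof. intros; unfold P1f, Ap, tp; field; auto. Qed.
Lemma Qa_tp p : p <> 0 -> Qf (Ap p) (tp p) (tp p^3*(Ap p - 1)^2/8) = p^20*(1-p^2)^6*(1+p^2)^9*ma p/(2*p)^36.
Proof. intros; unfold Qf, P1f, P2f, ma, Ap, tp; field; auto. Qed.
Lemma Qb_tp p : p <> 0 -> Qf (Ap p) (tp p) (tp p^3*(Ap p)/4) = p^11*(1+p^2)^9*mb p/(2*p)^24.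
Proof. intros; unfold Qf, P1f, P2f, mb, Ap, tp; field; auto. Qed.
Fixpoint bern (l : list R) (y z : R) : R :=
  match l with nil => 0 | c :: l' => c * z ^ (length l') + y * bern l' y z end.
Lemma bern_nonpos l y z : List.Forall (fun c => c <= 0) l -> 0 <= y -> 0 <= z -> bern l y z <= 0.
Proof.
  intros H Hy Hz; induction H; simpl. lra.
  assert (0 <= z ^ length l) by (apply pow_le; auto).
  nra.
Qed.
Definition la : list R := [(-100980407789878065); (-3466509734283850680); (-55353807169199630496); (-547083500167840247808); (-3758131816199752611840); (-19108947267171549904896); (-74798248519051934957568); (-231415641532473167314944); (-576414460203861773647872); (-1170945471880718299693056); (-1957223460509072643588096); (-2706754319385303409754112); (-3105277682843109417811968); (-2954789875487448791777280); (-2324887670548427603705856); (-1503050625635530479501312); (-790171814471356542615552); (-332464668078400019103744); (-109306537793136510369792); (-27061157383349798436864); (-4745857258526009720832); (-525732206100722221056); (-27670116110564327424)].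
Lemma ma_bern p : ma p * (3^22 * 274877906944) = bern la (4*p-1) (4-4*p).
Proof. unfold ma, la; simpl; ring. Qed.
Definition lb : list R := [(-9895604649984); (-326898550833152); (-4161514072178688); (-30265745476681728); (-146671724409126912); (-512780682028646400); (-1355191077077778432); (-2787943193725894656); (-4548846723199401984); (-5954182213143625728); (-6289472152835981312); (-5367718469719425024); (-3688674824244166656); (-2023909839867559936); (-873720479823642624); (-289898768641127424); (-71234442693598464); (-12185111281278672); (-1291748688934560); (-63660214386897)].
Lemma mb_bern p : mb p * (1^19 * 17179869184) = bern lb (4*p) (1-4*p).
Proof. unfold mb, lb; simpl; ring. Qed.
Lemma ma_neg p : 1/4 <= p <= 1 -> ma p <= 0.
Proof.
  intros Hp. assert (H := ma_bern p).
  assert (bern la (4*p-1) (4-4*p) <= 0).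
  { apply bern_nonpos; [unfold la; repeat constructor; lra | lra | lra]. }
  nra.
Qed.
Lemma mb_neg p : 0 <= p <= 1/4 -> mb p <= 0.
Proof.
  intros Hp. assert (H := mb_bern p).
  assert (bern lb (4*p) (1-4*p) <= 0).
  { apply bern_nonpos; [unfold lb; repeat constructor; lra | lra | lra]. }
  nra.
Qed.
Lemma Rdiv_le_0_compat a b : 0 <= a -> 0 < b -> 0 <= a / b.
Proof. intros; unfold Rdiv; apply Rmult_le_pos; [auto| left; apply Rinv_0_lt_compat; auto]. Qed.

Definition Phi1 A l s := Bf1 A s ^2 + 2*P1f A s * s^3 * l + 4*P2f A s * s^6 * l^2 + 8*A*s^9*l^3.

Lemma quad_conv P1 P2 A M Mb : 0 < A -> 0 <= M <= Mb -> P1 <= 0 ->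
  P1 + 2*Mb*P2 + 4*A*Mb^2 <= 0 -> P1 + 2*M*P2 + 4*A*M^2 <= 0.
Proof.
  intros HA HM H0 H1.
  destruct (Req_dec Mb 0) as [E|E].
  { assert (M = 0) by lra. subst. lra. }
  assert (Hb : 0 < Mb) by lra.
  assert (Hid : Mb * (P1 + 2*M*P2 + 4*A*M^2) =
     (Mb - M) * P1 + M * (P1 + 2*Mb*P2 + 4*A*Mb^2) + 4*A*M*(M-Mb)*Mb) by ring.
  assert (0 <= (Mb - M) * (-P1)) by (apply Rmult_le_pos; lra).
  assert (0 <= M * (-(P1 + 2*Mb*P2 + 4*A*Mb^2))) by (apply Rmult_le_pos; lra).
  assert (0 <= 4*A*M*(Mb-M)*Mb).
  { repeat apply Rmult_le_pos; lra. }
  assert (Mb * (P1 + 2*M*P2 + 4*A*M^2) <= 0) by nra.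
  destruct (Rle_dec (P1 + 2*M*P2 + 4*A*M^2) 0) as [|Hn]; auto.
  exfalso. assert (0 < Mb * (P1 + 2*M*P2 + 4*A*M^2)) by (apply Rmult_lt_0_compat; lra). lra.
Qed.

Lemma partA_norm (A l : R) : 1 < A -> 0 <= l -> l <= (A-1)^2/8 -> l <= A/4 ->
  exists s, 0 < s /\ A <= s^2 /\ Phi1 A l s <= 0.
Proof.
  intros HA Hl Hl1 Hl2.
  set (h := fun p => 3+8*p^2+6*p^4-p^8 - 16*A*p^2).
  assert (Hc : continuity h) by (unfold h; reg).
  set (p1 := /(4*A)).
  assert (Hp1 : 0 < p1 < 1/4).
  { unfold p1; split. apply Rinv_0_lt_compat; lra.
    apply Rmult_lt_reg_l with (4*A); [lra|]. rewrite Rinv_r by lra. lra. }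
  assert (H1 : 0 <= h p1).
  { unfold h. assert (E: 16*A*p1^2 = p1 * (16*A*p1)) by ring.
    assert (E2: 16*A*p1 = 4) by (unfold p1; field; lra).
    rewrite E, E2.
    assert (p1^2 <= 1) by nra. assert (p1^4 <= 1) by nra. assert (p1^8 <= 1) by nra.
    nra. }
  assert (H2 : h 1 < 0) by (unfold h; lra).
  destruct (IVT_cor h p1 1 Hc ltac:(lra) ltac:(nra)) as [p [Hp Hhp]].
  assert (Hp1' : p <> 1) by (intro E; subst p; lra).
  assert (Hp0 : 0 < p) by lra.
  assert (HAp : Ap p = A).
  { unfold Ap. unfold h in Hhp. field_simplify_eq; [|lra]. lra. }
  exists (tp p).
  assert (Hs : 0 < tp p) by (unfold tp; apply Rdiv_lt_0_compat; nra).
  split; [exact Hs|]. split.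
  { rewrite <- HAp. assert (E: tp p ^2 - Ap p = (1-p^4)^2/(16*p^2)) by (unfold tp, Ap; field; lra).
    assert (0 <= (1-p^4)^2/(16*p^2)) by (apply Rdiv_le_0_compat; [apply pow2_ge_0 | nra]). lra. }
  assert (HB : Bf1 A (tp p) = 0) by (rewrite <- HAp; apply Bf1_tp; lra).
  set (s := tp p) in *.
  set (M := s^3 * l).
  assert (Hphi : Phi1 A l s = 2 * M * Qf A s M).
  { unfold Phi1, Qf, M. rewrite HB. ring. }
  rewrite Hphi.
  assert (HM : 0 <= M) by (unfold M; apply Rmult_le_pos; [apply pow_le; lra|lra]).
  assert (HP1 : P1f A s <= 0).
  { unfold s; rewrite <- HAp, P1_tp by lra.
    assert (0 <= (1-p^2)^6*(1+p^2)^9/(512*p^12)).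
    { apply Rdiv_le_0_compat. apply Rmult_le_pos; apply pow_le; nra. apply Rmult_lt_0_compat; [lra| apply pow_lt; lra]. }
    lra. }
  assert (HQ : Qf A s M <= 0).
  { destruct (Rle_dec (1/4) p) as [Hq|Hq].
    - apply quad_conv with (Mb := s^3*(A-1)^2/8); try lra; auto.
      split; [auto|]. unfold M. replace (s^3*(A-1)^2/8) with (s^3*((A-1)^2/8)) by field. apply Rmult_le_compat_l; [apply pow_le; lra|lra].
      assert (E := Qa_tp p ltac:(lra)). rewrite HAp in E. fold s in E. unfold Qf in E. rewrite E.
      assert (ma p <= 0) by (apply ma_neg; lra).
      assert (0 <= p^20*(1-p^2)^6*(1+p^2)^9) by (apply Rmult_le_pos; [apply Rmult_le_pos|]; apply pow_le; nra).
      assert (0 < (2*p)^36) by (apply pow_lt; lra).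
      apply Rmult_le_reg_r with ((2*p)^36); auto. field_simplify; [|lra]. nra.
    - apply quad_conv with (Mb := s^3*A/4); try lra; auto.
      split; [auto|]. unfold M. replace (s^3*A/4) with (s^3*(A/4)) by field.
      apply Rmult_le_compat_l; [apply pow_le; lra|lra].
      assert (E := Qb_tp p ltac:(lra)). rewrite HAp in E. fold s in E. unfold Qf in E. rewrite E.
      assert (mb p <= 0) by (apply mb_neg; lra).
      assert (0 <= p^11*(1+p^2)^9) by (apply Rmult_le_pos; apply pow_le; nra).
      assert (0 < (2*p)^24) by (apply pow_lt; lra).
      apply Rmult_le_reg_r with ((2*p)^24); auto. field_simplify; [|lra]. nra. }
  nra.
Qed.

Fixpoint hor (l : list R) (x : R) : R :=
  match l with nil => 0 | c :: l' => c + x * hor l' x end.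

Lemma hor_eventually l c : 0 < c ->
  exists e R0, 0 < e /\ forall x, R0 <= x -> e <= hor (l ++ [c]) x.
Proof.
  intros Hc. induction l as [|d l IH].
  - exists c, 0. split; auto. intros x _. simpl. lra.
  - destruct IH as [e [R0 [He H]]].
    exists 1, (Rmax R0 (Rmax 0 ((1-d)/e))). split; [lra|].
    intros x Hx. simpl.
    assert (HR : R0 <= x) by (eapply Rle_trans; [apply Rmax_l| exact Hx]).
    assert (H0 : 0 <= x) by (eapply Rle_trans; [|exact Hx]; eapply Rle_trans; [|apply Rmax_r]; apply Rmax_l).
    assert (H1 : (1-d)/e <= x) by (eapply Rle_trans; [|exact Hx]; eapply Rle_trans; [|apply Rmax_r]; apply Rmax_r).
    specialize (H x HR).
    assert (1 - d <= x * e).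
    { apply Rmult_le_reg_r with (/e). apply Rinv_0_lt_compat; auto.
      replace (x*e*/e) with x by (field; lra). exact H1. }
    nra.
Qed.

Lemma Phi_hor a b lam x : Phi_C a b lam x = hor ([((1)*(a^2)^4*(b^2)^4); 0; 0; ((6)*(a^2)^3*(b^2)^3*(lam^2)^1); ((-12)*(a^2)^3*(b^2)^3); 0; ((8)*(a^2)^3*(b^2)^2 + (8)*(a^2)^2*(b^2)^3 + (12)*(a^2)^2*(b^2)^2*(lam^2)^2); ((6)*(a^2)^2*(b^2)^2*(lam^2)^1); ((30)*(a^2)^2*(b^2)^2); ((-40)*(a^2)^2*(b^2)^1*(lam^2)^1 + (-40)*(a^2)^1*(b^2)^2*(lam^2)^1 + (8)*(a^2)^1*(b^2)^1*(lam^2)^3); ((-48)*(a^2)^2*(b^2)^1 + (-48)*(a^2)^1*(b^2)^2 + (60)*(a^2)^1*(b^2)^1*(lam^2)^2); ((114)*(a^2)^1*(b^2)^1*(lam^2)^1); ((68)*(a^2)^1*(b^2)^1 + (16)*(a^2)^2 + (16)*(b^2)^2 + (-4)*(a^2)^1*(lam^2)^2 + (-4)*(b^2)^1*(lam^2)^2); ((-24)*(a^2)^1*(lam^2)^1 + (-24)*(b^2)^1*(lam^2)^1); ((-24)*(a^2)^1 + (-24)*(b^2)^1); ((2)*(lam^2)^1)] ++ [9]) x.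
Proof. unfold Phi_C; simpl; ring. Qed.

Lemma Phi_eventually a b lam : exists R0, forall x, R0 <= x -> 0 < Phi_C a b lam x.
Proof.
  destruct (hor_eventually [((1)*(a^2)^4*(b^2)^4); 0; 0; ((6)*(a^2)^3*(b^2)^3*(lam^2)^1); ((-12)*(a^2)^3*(b^2)^3); 0; ((8)*(a^2)^3*(b^2)^2 + (8)*(a^2)^2*(b^2)^3 + (12)*(a^2)^2*(b^2)^2*(lam^2)^2); ((6)*(a^2)^2*(b^2)^2*(lam^2)^1); ((30)*(a^2)^2*(b^2)^2); ((-40)*(a^2)^2*(b^2)^1*(lam^2)^1 + (-40)*(a^2)^1*(b^2)^2*(lam^2)^1 + (8)*(a^2)^1*(b^2)^1*(lam^2)^3); ((-48)*(a^2)^2*(b^2)^1 + (-48)*(a^2)^1*(b^2)^2 + (60)*(a^2)^1*(b^2)^1*(lam^2)^2); ((114)*(a^2)^1*(b^2)^1*(lam^2)^1); ((68)*(a^2)^1*(b^2)^1 + (16)*(a^2)^2 + (16)*(b^2)^2 + (-4)*(a^2)^1*(lam^2)^2 + (-4)*(b^2)^1*(lam^2)^2); ((-24)*(a^2)^1*(lam^2)^1 + (-24)*(b^2)^1*(lam^2)^1); ((-24)*(a^2)^1 + (-24)*(b^2)^1); ((2)*(lam^2)^1)] 9 ltac:(lra)) as [e [R0 [He H]]].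
  exists R0. intros x Hx. rewrite Phi_hor. specialize (H x Hx). lra.
Qed.

Lemma Phi_cont a b lam : continuity (fun x => Phi_C a b lam x).
Proof. unfold Phi_C; reg. Qed.

Lemma largest_root a b lam t : Phi_C a b lam t <= 0 ->
  exists r, is_largest_root_PhiC a b lam r /\ t <= r.
Proof.
  intros Ht.
  destruct (Phi_eventually a b lam) as [R0 HR0].
  set (f := fun x => Phi_C a b lam x).
  set (R1 := Rmax R0 t).
  assert (HR1 : 0 < f R1) by (apply HR0; apply Rmax_l).
  assert (HtR1 : t <= R1) by apply Rmax_r.
  destruct (IVT_cor f t R1 (Phi_cont a b lam) HtR1 ltac:(unfold f in *; nra)) as [z [Hz Hfz]].
  set (E := fun x => f x = 0 /\ t <= x).
  assert (Hb : bound E).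
  { exists R1. intros x [Hx1 Hx2]. destruct (Rle_dec x R1) as [|Hn]; auto.
    assert (0 < f x) by (apply HR0; unfold R1 in Hn; pose proof (Rmax_l R0 t); lra). lra. }
  destruct (completeness E Hb (ex_intro _ z (conj Hfz (proj1 Hz)))) as [r [Hub Hlub]].
  assert (Hzr : z <= r) by (apply Hub; split; [exact Hfz | lra]).
  assert (Hfr : f r = 0).
  { destruct (Req_dec (f r) 0) as [|Hne]; auto. exfalso.
    assert (Hc := Phi_cont a b lam r).
    unfold continuity_pt, continue_in, limit1_in, limit_in in Hc.
    destruct (Hc (Rabs (f r)) ltac:(apply Rabs_pos_lt; auto)) as [d [Hd Hd2]].
    assert (Hex : exists y, E y /\ r - d < y).
    { apply NNPP. intro Hno.
      assert (r <= r - d).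
      { apply Hlub. intros y Hy. destruct (Rle_dec y (r - d)) as [|Hn]; auto.
        exfalso; apply Hno; exists y; split; auto; lra. }
      lra. }
    destruct Hex as [y [[Hy1 Hy2] Hy3]].
    assert (Hyr : y <= r) by (apply Hub; split; auto).
    destruct (Req_dec y r) as [->|Hyne]; [congruence|].
    specialize (Hd2 y). simpl in Hd2. unfold R_dist in Hd2.
    assert (Hlt : Rabs (f y - f r) < Rabs (f r)).
    { apply Hd2. split. split; [exact I| auto]. rewrite Rabs_left; lra. }
    unfold f in Hy1, Hlt. fold f in Hlt. rewrite Hy1 in Hlt.
    rewrite Rminus_0_l, Rabs_Ropp in Hlt. lra. }
  exists r. split; [split|].
  - exact Hfr.
  - intros x Hx. destruct (Rle_dec t x) as [Htx|Htx].
    + apply Hub. split; auto.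
    + lra.
  - lra.
Qed.

Lemma common_bounds a b lam s : 0 < b -> b < a -> 0 < s ->
  (a^2-s^2)*(s^2-b^2) - 2*lam^2*s^3 = 0 -> b <= s <= a.
Proof.
  intros Hb Hab Hs E.
  assert (Hp : 0 <= (a^2-s^2)*(s^2-b^2)).
  { assert (0 <= 2*lam^2*s^3) by (assert (0 <= lam^2) by nra; assert (0 < s^3) by (apply pow_lt; lra); nra). lra. }
  split.
  - destruct (Rle_dec b s) as [|Hn]; auto. exfalso.
    assert (s^2 < b^2) by nra. assert (s^2 < a^2) by nra.
    assert ((a^2-s^2)*(s^2-b^2) < 0) by nra. lra.
  - destruct (Rle_dec s a) as [|Hn]; auto. exfalso.
    assert (a^2 < s^2) by nra. assert (b^2 < s^2) by nra.
    assert ((a^2-s^2)*(s^2-b^2) < 0) by nra. lra.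
Qed.

Lemma Phi_scale a b lam t : 0 < b ->
  Phi_C a b lam t = b^16 * Phi1 (a^2/b^2) (lam^2/b) (t/b).
Proof. intros Hb. unfold Phi_C, Phi1, Bf1, P1f, P2f. field. lra. Qed.

Lemma partA a b lam s : 0 < b -> b < a -> 0 <= lam -> 0 < s ->
  (a^2-s^2)*(s^2-b^2) - 2*lam^2*s^3 = 0 ->
  exists r, is_largest_root_PhiC a b lam r /\ s <= r.
Proof.
  intros Hb Hab Hl Hs E.
  destruct (common_bounds a b lam s Hb Hab Hs E) as [Hbs Hsa].
  set (L := lam^2) in *.
  assert (HL : 0 <= L) by (unfold L; nra).
  assert (Hs3 : b^3 <= s^3) by (apply pow_incr; lra).
  assert (Hb3 : 0 < b^3) by (apply pow_lt; lra).
  assert (B1 : 8*L*b^3 <= (a^2-b^2)^2).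
  { assert (Id : 4*((a^2-s^2)*(s^2-b^2)) = (a^2-b^2)^2 - (a^2+b^2-2*s^2)^2) by ring.
    assert (0 <= (a^2+b^2-2*s^2)^2) by apply pow2_ge_0.
    assert (8*L*s^3 <= (a^2-b^2)^2) by lra.
    assert (0 <= L*(s^3-b^3)) by (apply Rmult_le_pos; lra). lra. }
  assert (B2 : 4*L*b <= a^2).
  { assert (H1 : 2*b*(s^2-b^2) <= s^3).
    { assert (Id : s^3 - 2*b*(s^2-b^2) = b*((b - (s-b)/2)^2 + 3/4*(s-b)^2) + (s-b)^3) by field.
      assert (0 <= (s-b)^3) by (apply pow_le; lra).
      assert (0 <= b*((b - (s-b)/2)^2 + 3/4*(s-b)^2)).
      { apply Rmult_le_pos; [lra|]. assert (0 <= (b - (s-b)/2)^2) by apply pow2_ge_0. assert (0 <= (s-b)^2) by apply pow2_ge_0. lra. }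
      lra. }
    assert (H2 : 2*L*s^3 <= a^2*(s^2-b^2)).
    { assert (0 <= s^2*(s^2-b^2)) by (apply Rmult_le_pos; nra). nra. }
    assert (H3 : 4*L*b*s^3 <= a^2*s^3).
    { assert (0 <= a^2) by nra. assert (a^2*(2*b*(s^2-b^2)) <= a^2*s^3) by (apply Rmult_le_compat_l; lra). nra. }
    assert (0 < s^3) by (apply pow_lt; lra). nra. }
  set (A1 := a^2/b^2). set (l := L/b).
  assert (HA1 : 1 < A1).
  { unfold A1. apply Rmult_lt_reg_r with (b^2); [nra|]. field_simplify; nra. }
  assert (Hl0 : 0 <= l) by (unfold l; apply Rdiv_le_0_compat; lra).
  assert (Hl1 : l <= (A1-1)^2/8).
  { unfold l, A1. apply Rmult_le_reg_r with (8*b^4); [nra|].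
    field_simplify; [|lra|lra]. nra. }
  assert (Hl2 : l <= A1/4).
  { unfold l, A1. apply Rmult_le_reg_r with (4*b^2); [nra|].
    field_simplify; [|lra|lra]. nra. }
  destruct (partA_norm A1 l HA1 Hl0 Hl1 Hl2) as [tau [Htau [HAt Hphi]]].
  set (t := b*tau).
  assert (Ht : Phi_C a b lam t <= 0).
  { rewrite Phi_scale by lra. fold L. fold A1 l.
    replace (t/b) with tau by (unfold t; field; lra).
    assert (0 < b^16) by (apply pow_lt; lra). nra. }
  destruct (largest_root a b lam t Ht) as [r [Hr Htr]].
  exists r; split; auto.
  assert (a <= t).
  { unfold t. unfold A1 in HAt.
    assert (a^2 <= b^2*tau^2).
    { apply Rmult_le_reg_r with (/b^2). apply Rinv_0_lt_compat; nra.
      replace (a^2*/b^2) with (a^2/b^2) by (unfold Rdiv; ring).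
      replace (b^2*tau^2*/b^2) with (tau^2) by (field; lra). lra. }
    destruct (Rle_dec a (b*tau)) as [|Hn]; auto. exfalso.
    assert (0 < b*tau) by nra.
    assert ((b*tau)*(b*tau) < a*a) by (apply Rmult_le_0_lt_compat; lra).
    nra. }
  lra.
Qed.

Definition gg (a b lam s : R) := (a ^ 2 - s ^ 2) * (s ^ 2 - b ^ 2) - 2 * lam ^ 2 * s ^ 3.

Lemma equiv_common a b lam s h : 0 < b -> b < a -> 0 <= lam ->
  (in_D_T a b lam s h /\ in_D_C a b lam s h) <-> common_sys a b lam s h.
Proof.
  intros Hb Hab Hl. unfold in_D_T, in_D_C, common_sys. split.
  - intros [[HT [Hs _]] [HC _]].
    assert (Id : gg a b lam s = s^2 * F_T a b lam s h - F_C a b lam s h)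
      by (unfold gg, F_T, F_C; field).
    rewrite HT, HC in Id. split; [unfold gg in Id; lra|]. split; [lra|].
    unfold F_T in HT. apply Rmult_eq_reg_r with (2*s); [|lra].
    field_simplify; [|lra]. lra.
  - intros [Hg [Hs Hh]].
    assert (HT : F_T a b lam s h = 0) by (subst h; unfold F_T; field; lra).
    assert (Id : gg a b lam s = s^2 * F_T a b lam s h - F_C a b lam s h)
      by (unfold gg, F_T, F_C; field).
    assert (HC : F_C a b lam s h = 0) by (unfold gg in Id; rewrite HT in Id; lra).
    destruct (common_bounds a b lam s Hb Hab Hs Hg) as [Hbs Hsa].
    split; [split; [auto|split; [auto|]]|].
    + assert (Hp : 2*lam^2*s^3 = (a^2-s^2)*(s^2-b^2)) by lra.
      assert (H1 : (a^2-s^2)*(s^2-b^2) <= a^2*s^2).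
      { assert (0 <= (a^2-s^2)*b^2) by (apply Rmult_le_pos; nra). nra. }
      assert (H2 : a^2 <= (a+b)^2) by nra.
      assert (0 < s^2) by nra.
      assert (2*lam^2*s*s^2 <= (a+b)^2*s^2) by nra.
      nra.
    + split; [auto|]. right. split; [auto|].
      destruct (partA a b lam s Hb Hab Hl Hs Hg) as [r [Hr Hsr]].
      exists r; auto.
Qed.

Lemma vieta a b lam x y z : 0 < b -> 0 <= lam -> 0 < x -> 0 < y -> 0 < z ->
  x <> y -> x <> z -> y <> z ->
  gg a b lam x = 0 -> gg a b lam y = 0 -> gg a b lam z = 0 -> False.
Proof.
  intros Hb Hl Hx Hy Hz Hxy Hxz Hyz Gx Gy Gz. unfold gg in *.
  set (L := lam^2) in *.
  set (Q := (x^3+x^2*y+x*y^2+y^3) + 2*L*(x^2+x*y+y^2) - (a^2+b^2)*(x+y)).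
  set (Q' := (x^3+x^2*z+x*z^2+z^3) + 2*L*(x^2+x*z+z^2) - (a^2+b^2)*(x+z)).
  set (Rr := (x^2+y^2+z^2+x*y+x*z+y*z) + 2*L*(x+y+z) - (a^2+b^2)).
  assert (E1 : (x-y)*Q = 0) by (unfold Q; nra).
  assert (E2 : (x-z)*Q' = 0) by (unfold Q'; nra).
  assert (HQ : Q = 0).
  { destruct (Rmult_integral _ _ E1) as [H|H]; auto. exfalso; apply Hxy; lra. }
  assert (HQ' : Q' = 0).
  { destruct (Rmult_integral _ _ E2) as [H|H]; auto. exfalso; apply Hxz; lra. }
  assert (E3 : (y-z)*Rr = 0) by (unfold Rr; unfold Q, Q' in *; nra).
  assert (HR : Rr = 0).
  { destruct (Rmult_integral _ _ E3) as [H|H]; auto. exfalso; apply Hyz; lra. }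
  assert (Id : a^2*b^2 = -((a^2-x^2)*(x^2-b^2) - 2*L*x^3) - Q*x + Rr*x*y - x*y*z*(x+y+z+2*L))
    by (unfold Q, Rr; ring).
  rewrite Gx, HQ, HR in Id.
  assert (0 <= L) by (unfold L; nra).
  assert (0 < x*y*z) by (apply Rmult_lt_0_compat; [apply Rmult_lt_0_compat|]; lra).
  assert (0 < a^2*b^2) by (apply Rmult_lt_0_compat; nra).
  nra.
Qed.

Lemma g_id a b lam m s : 0 < m ->
  m^4 + (a^2+b^2)*m^2 - 3*a^2*b^2 = 0 ->
  m^3 * gg a b lam s =
  2*m^3*s^3*((a^2 - m^2)*(m^2-b^2)/(2*m^3) - lam^2)
  - (s-m)^2*(m^3*s^2 + 2*a^2*b^2*s + a^2*b^2*m).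
Proof.
  intros Hm Hrel.
  assert (Id : m^3 * gg a b lam s -
    (2*m^3*s^3*((a^2 - m^2)*(m^2-b^2)/(2*m^3) - lam^2)
     - (s-m)^2*(m^3*s^2 + 2*a^2*b^2*s + a^2*b^2*m))
    = (m^4 + (a^2+b^2)*m^2 - 3*a^2*b^2) * (m*s^2 - s^3)).
  { unfold gg. field. lra. }
  rewrite Hrel in Id. lra.
Qed.

Theorem proposition2 (a b lam : R) (hb : 0 < b) (hab : b < a) (hlam : 0 <= lam) :
  (lam ^ 4 < Lambda a b ->
     (forall s h, (in_D_T a b lam s h /\ in_D_C a b lam s h) <->
                  common_sys a b lam s h) /\
     exists s1 h1 s2 h2, (s1, h1) <> (s2, h2) /\
       forall s h, common_sys a b lam s h <-> ((s, h) = (s1, h1) \/ (s, h) = (s2, h2)))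
  /\
  (lam ^ 4 = Lambda a b ->
     (forall s h, (in_D_T a b lam s h /\ in_D_C a b lam s h) <->
                  common_sys a b lam s h) /\
     exists s0 h0,
       (forall s h, common_sys a b lam s h <-> (s, h) = (s0, h0)) /\
       tangent_at (F_T a b lam) (F_C a b lam) s0 h0)
  /\
  (Lambda a b < lam ^ 4 ->
     forall s h, ~ (in_D_T a b lam s h /\ in_D_C a b lam s h)).
Proof.
  set (q := a^4 + 14*a^2*b^2 + b^4).
  assert (Hq : 0 <= q) by (unfold q; nra).
  set (r := sqrt q).
  assert (Hr2 : r^2 = q) by (unfold r; rewrite <- Rsqr_pow2; apply Rsqr_sqrt; auto).
  assert (Hr0 : 0 <= r) by (unfold r; apply sqrt_pos).
  set (v := (r - (a^2+b^2))/2).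
  assert (Hrelv : v^2 + (a^2+b^2)*v - 3*a^2*b^2 = 0).
  { assert (E : v^2 + (a^2+b^2)*v - 3*a^2*b^2 = (r^2 - q)/4) by (unfold v, q; field).
    rewrite E, Hr2. field. }
  assert (Hvb : b^2 < v).
  { unfold v. destruct (Rle_dec r (a^2 + 3*b^2)) as [Hn|Hn]; [|lra].
    exfalso. assert (r^2 <= (a^2+3*b^2)^2) by (apply pow_incr; lra).
    unfold q in Hr2. assert (b^2 < a^2) by nra. assert (0 < b^2*(a^2-b^2)) by (apply Rmult_lt_0_compat; nra). nra. }
  assert (Hva : v < a^2).
  { unfold v. destruct (Rle_dec (3*a^2 + b^2) r) as [Hn|Hn]; [|lra].
    exfalso. assert ((3*a^2+b^2)^2 <= r^2) by (apply pow_incr; nra).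
    unfold q in Hr2. assert (b^2 < a^2) by nra. assert (0 < a^2*(a^2-b^2)) by (apply Rmult_lt_0_compat; nra). nra. }
  set (m := sqrt v).
  assert (Hm2 : m^2 = v) by (unfold m; rewrite <- Rsqr_pow2; apply Rsqr_sqrt; nra).
  assert (Hm0 : 0 < m) by (unfold m; apply sqrt_lt_R0; nra).
  assert (Hrel : m^4 + (a^2+b^2)*m^2 - 3*a^2*b^2 = 0).
  { replace (m^4) with ((m^2)^2) by ring. rewrite Hm2. auto. }
  set (Lm := (a^2 - m^2)*(m^2-b^2)/(2*m^3)).
  assert (HLm : 0 < Lm).
  { unfold Lm. apply Rdiv_lt_0_compat. rewrite Hm2. apply Rmult_lt_0_compat; lra.
    assert (0 < m^3) by (apply pow_lt; auto). lra. }
  assert (HLam : Lambda a b = Lm^2).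
  { unfold Lambda. cbv zeta. fold q. fold r.
    assert (Hab2 : 0 < a^2*b^2) by (apply Rmult_lt_0_compat; nra).
    assert (Hm6 : m^6 = v^3) by (replace (m^6) with ((m^2)^3) by ring; rewrite Hm2; auto).
    assert (E : Lm^2 = (a^2 - v)^2*(v-b^2)^2/(4*v^3)).
    { unfold Lm. rewrite Hm2. rewrite <- Hm6. field. lra. }
    rewrite E.
    assert (Hv0 : 0 < v) by nra.
    assert (D : 54*(a^2*b^2)*((a^2-v)^2*(v-b^2)^2) - 4*v^3*(a^6 - 33*a^4*b^2 - 33*a^2*b^4 + b^6 + q*r)
       = (r^2 - q) * ((-29/8)*a^2*b^2*r^2 + (-1/2)*a^4*r^2 + (-1/2)*b^4*r^2 + 12*a^4*b^2*r + 12*a^2*b^4*r + a^6*r + b^6*r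
          + (-67/8)*a^6*b^2 + (-81/4)*a^4*b^4 + (-67/8)*a^2*b^6 + (-1/2)*a^8 + (-1/2)*b^8)).
    { unfold v, q. field. }
    rewrite Hr2, Rminus_diag, Rmult_0_l in D.
    apply Rmult_eq_reg_r with (54*(a^2*b^2)*(4*v^3)).
    2: { apply Rgt_not_eq. apply Rmult_lt_0_compat; [lra|]. assert (0 < v^3) by (apply pow_lt; lra). lra. }
    field_simplify; [|lra|lra]. 
    assert (0 < v^3) by (apply pow_lt; lra).
    nra. }
  assert (HL4 : lam^4 = (lam^2)^2) by ring.
  assert (HL0 : 0 <= lam^2) by nra.
  assert (Gid := fun s => g_id a b lam m s Hm0 Hrel). fold Lm in Gid.
  assert (HK : forall s, 0 < s -> 0 < m^3*s^2 + 2*a^2*b^2*s + a^2*b^2*m).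
  { intros s Hs. assert (0 < m^3) by (apply pow_lt; auto).
    assert (0 < a^2*b^2) by (apply Rmult_lt_0_compat; nra). nra. }
  assert (Hm3 : 0 < m^3) by (apply pow_lt; auto).
  assert (Hbm : b < m) by (apply Rnot_le_lt; intro; assert (m^2 <= b^2) by (apply pow_incr; lra); lra).
  assert (Hma : m < a) by (apply Rnot_le_lt; intro; assert (a^2 <= m^2) by (apply pow_incr; lra); lra).
  set (hf := fun s => (2 * s ^ 2 - s * lam ^ 2 + a ^ 2 + b ^ 2) / (2 * s)).
  assert (Hcs : forall s h, common_sys a b lam s h <-> (gg a b lam s = 0 /\ 0 < s /\ h = hf s)).
  { intros; unfold common_sys, gg, hf; tauto. }
  split; [|split].
  -
    intros Hlt. rewrite HL4, HLam in Hlt.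
    assert (HLlt : lam^2 < Lm) by nra.
    split. { intros; apply equiv_common; auto. }
    assert (Hgm : 0 < gg a b lam m).
    { specialize (Gid m). replace ((m - m)^2) with 0 in Gid by ring.
      assert (0 < 2*m^3*m^3*(Lm - lam^2)) by (repeat apply Rmult_lt_0_compat; lra).
      assert (0 < m^3*(gg a b lam m)) by lra.
      destruct (Rlt_le_dec 0 (gg a b lam m)) as [|Hn]; auto.
      assert (0 <= m^3*(-(gg a b lam m))) by (apply Rmult_le_pos; lra). lra. }
    assert (Hcont : continuity (fun s => gg a b lam s)) by (unfold gg; reg).
    assert (Hgb : gg a b lam b <= 0) by (unfold gg; assert (0 < b^3) by (apply pow_lt; lra); nra).
    assert (Hga : gg a b lam a <= 0) by (unfold gg; assert (0 < a^3) by (apply pow_lt; lra); nra).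
    destruct (IVT_cor _ b m Hcont ltac:(lra) ltac:(nra)) as [s1 [Hs1 G1]].
    destruct (IVT_cor _ m a Hcont ltac:(lra) ltac:(nra)) as [s2 [Hs2 G2]].
    assert (s1 <> m) by (intro E; rewrite E in G1; lra).
    assert (s2 <> m) by (intro E; rewrite E in G2; lra).
    exists s1, (hf s1), s2, (hf s2). split.
    { intro E. injection E. intros _ E'. lra. }
    intros s h. rewrite Hcs. split.
    + intros [Gs [Hs Hh]]. subst h.
      destruct (Req_dec s s1) as [->|N1]; [left; reflexivity|].
      destruct (Req_dec s s2) as [->|N2]; [right; reflexivity|].
      exfalso. apply (vieta a b lam s s1 s2); auto; lra.
    + intros [E|E]; injection E; intros -> ->; repeat split; auto; lra.
  -
    intros Heq. rewrite HL4, HLam in Heq.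
    assert (HLe : lam^2 = Lm) by nra.
    split. { intros; apply equiv_common; auto. }
    assert (Hgm : gg a b lam m = 0).
    { specialize (Gid m). rewrite HLe in Gid. replace ((m - m)^2) with 0 in Gid by ring.
      assert (m^3 * gg a b lam m = 0) by lra.
      destruct (Rmult_integral _ _ H) as [H1|H1]; auto. lra. }
    exists m, (hf m). split.
    + intros s h. rewrite Hcs. split.
      * intros [Gs [Hs Hh]]. subst h.
        specialize (Gid s). rewrite Gs, HLe in Gid.
        assert (E : (s-m)^2*(m^3*s^2 + 2*a^2*b^2*s + a^2*b^2*m) = 0).
        { replace (Lm - Lm) with 0 in Gid by ring. lra. }
        destruct (Rmult_integral _ _ E) as [E1|E1].
        -- assert (s = m) by nra. subst s. reflexivity.
        -- specialize (HK s Hs). lra.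
      * intros E; injection E; intros -> ->; repeat split; auto.
    + unfold tangent_at.
      set (h0 := hf m).
      assert (D1 : Derive (fun x => F_T a b lam x h0) m = 4*m - 2*(h0 + lam^2/2)).
      { apply is_derive_unique. unfold F_T. auto_derive; auto. field. }
      assert (D2 : Derive (fun y => F_T a b lam m y) h0 = -2*m).
      { apply is_derive_unique. unfold F_T. auto_derive; auto. field. }
      assert (D3 : Derive (fun x => F_C a b lam x h0) m = 12*m^3 - 6*(h0 - lam^2/2)*m^2).
      { apply is_derive_unique. unfold F_C. auto_derive; auto. field. }
      assert (D4 : Derive (fun y => F_C a b lam m y) h0 = -2*m^3).
      { apply is_derive_unique. unfold F_C. auto_derive; auto. field. }
      cbv zeta. rewrite D1, D2, D3, D4.
      assert (Hc : common_sys a b lam m h0) by (apply Hcs; repeat split; auto).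
      apply equiv_common in Hc; auto.
      destruct Hc as [[HT _] [HC _]].
      split; [exact HT|]. split; [exact HC|].
      split; [right; lra|]. split; [right; lra|].
      assert (Hdet : (4*m - 2*(h0 + lam^2/2)) * (-2*m^3) - (-2*m) * (12*m^3 - 6*(h0 - lam^2/2)*m^2)
                     = 2*(m^4 + (a^2+b^2)*m^2 - 3*a^2*b^2)).
      { unfold h0, hf. rewrite HLe. unfold Lm. field. lra. }
      rewrite Hdet, Hrel. ring.
  - intros Hgt s h [HT HC].
    rewrite HL4, HLam in Hgt.
    assert (HLgt : Lm < lam^2) by nra.
    assert (Hc : common_sys a b lam s h) by (apply equiv_common; auto).
    apply Hcs in Hc. destruct Hc as [Gs [Hs _]].
    assert (Gs' : gg a b lam s = 0) by exact Gs.
    specialize (Gid s). rewrite Gs' in Gid.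
    specialize (HK s Hs).
    assert (0 < s^3) by (apply pow_lt; auto).
    assert (0 <= (s-m)^2) by apply pow2_ge_0.
    assert (0 < 2*m^3*s^3*(lam^2 - Lm)) by (repeat apply Rmult_lt_0_compat; lra).
    nra.
Qed.
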